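(* For every $k\ge 3$ there exists a root $\lambda\in\mathbb{C}$ of the matching polynomial $\varphi(\mathrm{COMB}_k)$ such that $\lambda^k\notin\mathbb{R}$.
   Context: The $k$-comb $\mathrm{COMB}_k$ is the $k$-uniform hypergraph with vertex set $[k^2]$ and edge set consisting of the edge $[k]=\{1,\dots,k\}$ together with the $k$ edges $\{i+tk: 0\le t\le k-1\}$ for $i\in[k]$. A $t$-matching of a $k$-uniform hypergraph $H$ is a set of $t$ pairwise disjoint edges. The matching polynomial is $\varphi(H)=\sum_{i=0}^{m}(-1)^i|\mathcal{M}_i|\,x^{(m-i)k}$, where $\mathcal{M}_i$ is the set of $i$-matchings of $H$ and $m$ is the maximum size of a matching in $H$. (The paper phrases the conclusion as $\lambda\notin\mathbb{R}[\zeta_k]$, meaning $\lambda$ is not a $k$-th root of a real number.) *)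

(* Defs.v *)
From HB Require Import structures.
From mathcomp Require Import all_boot all_order all_algebra all_field.
Set Implicit Arguments. Unset Strict Implicit. Unset Printing Implicit Defensive.
Import Order.TTheory GRing.Theory Num.Theory.

Definition is_matching (T : finType) (E : {set {set T}}) (M : {set {set T}}) : bool :=
  (M \subset E) &&
  [forall e1 in M, forall e2 in M, (e1 != e2) ==> [disjoint e1 & e2]].

Definition matchings (T : finType) (E : {set {set T}}) (t : nat) : {set {set {set T}}} :=
  [set M : {set {set T}} | is_matching E M & #|M| == t].

Definition max_matching (T : finType) (E : {set {set T}}) : nat :=
  \max_(M : {set {set T}} | is_matching E M) #|M|.

Local Open Scope ring_scope.

Definition matching_poly (R : nzRingType) (k : nat) (T : finType)
    (E : {set {set T}}) : {poly R} :=
  let m := max_matching E in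
  \sum_(i < m.+1) (((-1) ^+ i * (#|matchings E i|)%:R) *: 'X^((m - i) * k)%N).

(* The k-comb on vertex set [k^2], encoded 0-based as 'I_(k*k) (vertex v
   corresponds to v+1): spine {0,...,k-1} (i.e. [k]) and, for each i < k,
   the tooth {i + t k : 0 <= t <= k-1}. *)
Definition comb_edges (k : nat) : {set {set 'I_(k * k)}} :=
  [set [set v : 'I_(k * k) | (val v < k)%N]] :|:
  [set [set v : 'I_(k * k) | [exists t : 'I_k, val v == (val i + t * k)%N]]
     | i : 'I_k].

(* Main.v *)
Require Import Defs.
From HB Require Import structures.
From mathcomp Require Import all_boot all_order all_algebra all_field.
From mathcomp Require Import ring zify.
Import Order.TTheory GRing.Theory Num.Theory.
Local Open Scope ring_scope.

Definition PP {R : comNzRingType} (s : seq R) : {poly R} := \prod_(z <- s) ('X - z%:P).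

Lemma PP_cons {R : comNzRingType} (a : R) (s : seq R) : PP (a :: s) = 'X * PP s - a%:P * PP s.
Proof. by rewrite /PP big_cons mulrBl. Qed.

Lemma PP_coef_cons {R : comNzRingType} (a : R) (s : seq R) (i : nat) :
  (PP (a :: s))`_i = (if i == 0%N then 0 else (PP s)`_i.-1) - a * (PP s)`_i.
Proof. by rewrite PP_cons coefB coefXM coefCM. Qed.

Lemma PP_lead {R : comNzRingType} (s : seq R) : (PP s)`_(size s) = 1.
Proof.
elim: s => [|a s IH] /=; first by rewrite /PP big_nil coefC.
rewrite PP_coef_cons /= IH.
have -> : (PP s)`_(size s).+1 = 0.
  by apply: nth_default; rewrite /PP size_prod_XsubC.
by rewrite mulr0 subr0.
Qed.

Lemma PP_c1 {R : comNzRingType} (s : seq R) (n : nat) : size s = n.+1 -> (PP s)`_n = - \sum_(z <- s) z.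
Proof.
elim: s n => [|a s IH] n //= [Hn]; rewrite big_cons PP_coef_cons.
case: n Hn => [|m] Hm.
  by case: s Hm {IH} => // _; rewrite /PP !big_nil coefC /= sub0r mulr1 addr0.
by rewrite /= IH // -Hm PP_lead mulr1 opprD addrC.
Qed.

Lemma PP_c2 {R : comNzRingType} (s : seq R) (n : nat) : size s = n.+2 ->
  2%:R * (PP s)`_n = (\sum_(z <- s) z) ^+ 2 - \sum_(z <- s) z ^+ 2.
Proof.
elim: s n => [|a s IH] n //= [Hn]; rewrite !big_cons PP_coef_cons.
case: n Hn => [|m] Hm.
  rewrite /= (@PP_c1 _ _ _ Hm) sub0r.
  case: s Hm {IH} => // b [] // _.
  rewrite !big_cons !big_nil. by rewrite -[2%:R]/(1+1) ; ring.
have := IH m Hm; rewrite /= (@PP_c1 _ _ _ Hm) => E.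
rewrite mulrBr E -[2%:R]/(1+1) ; ring.
Qed.


Lemma nonreal_root k : (3 <= k)%N ->
  exists w : algC, root ('X^k + 'X - 1) w /\ w \notin Num.real.
Proof.
move=> hk.
set q : {poly algC} := 'X^k + 'X - 1.
have sXB : size ('X - 1 : {poly algC}) = 2%N by rewrite size_XsubC.
have hq : q = 'X^k + ('X - 1) by rewrite /q addrA.
have lq : lead_coef q = 1.
  by rewrite hq lead_coefDl ?lead_coefXn // size_polyXn sXB; lia.
have szq : size q = k.+1.
  by rewrite hq size_addl ?size_polyXn // sXB; lia.
have cq i : q`_i = (i == k)%:R + (i == 1%N)%:R - (i == 0%N)%:R.
  by rewrite /q !coefB !coefD coefXn coefX coefC; case: (i == 0%N).
have [rs Hrs] := closed_field_poly_normal q.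
rewrite lq scale1r in Hrs.
have szrs : size rs = k by apply/eqP; rewrite -eqSS -szq Hrs size_prod_XsubC.
have root_rs z : z \in rs -> root q z by move=> zin; rewrite Hrs root_prod_XsubC.
have nz z : z \in rs -> z != 0.
  move=> /root_rs; apply: contraTneq => ->.
  rewrite /root /q !hornerE expr0n; have -> : (k == 0%N) = false by lia.
  by rewrite /= !add0r oppr_eq0 oner_eq0.
case/boolP: (has (fun z => z \notin Num.real) rs).
  by case/hasP => z zin zr; exists z; split => //; apply: root_rs.
move/hasPn => allr; exfalso.
have E1 : \sum_(z <- rs) z = 0.
  apply/eqP; rewrite -oppr_eq0 -(@PP_c1 _ rs k.-1); last by rewrite szrs; lia.
  rewrite -/(PP rs) in Hrs; rewrite -Hrs cq.
  have -> : (k.-1 == k) = false by lia.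
  have -> : (k.-1 == 1%N) = false by lia.
  have -> : (k.-1 == 0%N) = false by lia.
  by rewrite /= subr0 addr0.
have E2 := (@PP_c2 _ rs k.-2); rewrite -/(PP rs) in Hrs; rewrite -Hrs in E2.
have {E2} E2 := E2 (ltac:(rewrite szrs; lia)).
rewrite E1 expr0n /= sub0r cq in E2.
have pos : 0 < \sum_(z <- rs) z ^+ 2.
  case: rs szrs allr nz {Hrs root_rs E1 E2} => [|z0 rs'] szrs allr nz.
    by rewrite -szrs in hk.
  rewrite big_cons ltr_wpDr //.
    rewrite big_seq; apply: sumr_ge0 => z zin.
    have zr : z \is Num.real by move: (allr z (mem_behead (s:=z0::rs') zin)); rewrite negbK.
    by rewrite -real_normK // exprn_ge0.
  have zr : z0 \is Num.real by move: (allr z0 (mem_head _ _)); rewrite negbK.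
  by rewrite -real_normK // exprn_gt0 // normr_gt0 nz // mem_head.
move: E2 pos.
have -> : (k.-2 == k) = false by lia.
have -> : (k.-2 == 0%N) = false by lia.
rewrite /= => E2.
move: E2; rewrite add0r subr0 => E2.
have : 0 <= 2%:R * ((k.-2 == 1%N)%:R : algC) by apply: mulr_ge0.
by rewrite E2 oppr_ge0 => le lt; move: (le_lt_trans le lt); rewrite ltxx.
Qed.


Set Implicit Arguments. Unset Strict Implicit.

Definition spine k := [set v : 'I_(k * k) | (val v < k)%N].
Definition tooth k (i : 'I_k) :=
  [set v : 'I_(k * k) | [exists t : 'I_k, val v == (val i + t * k)%N]].
Arguments tooth {k}.
Definition Teeth k := [set tooth i | i : 'I_k].

Lemma combE k : comb_edges k = [set spine k] :|: Teeth k.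
Proof. by []. Qed.

Lemma mem_tooth k (i : 'I_k) v : (v \in tooth i) = (val v %% k == i)%N.
Proof.
rewrite inE; apply/existsP/eqP => [[t /eqP ->] | E].
  by rewrite addnC modnMDl modn_small ?ltn_ord.
have kpos : (0 < k)%N by have := ltn_ord i; lia.
have ht : (val v %/ k < k)%N by rewrite ltn_divLR // ltn_ord.
exists (Ordinal ht); rewrite /= -E addnC -divn_eq //.
Qed.

Lemma vert_lt {k} (i : 'I_k) : (val i < k * k)%N.
Proof. by apply: leq_trans (ltn_ord i) _; rewrite leq_pmulr // (leq_ltn_trans _ (ltn_ord i)). Qed.

Definition vert k (i : 'I_k) : 'I_(k * k) := Ordinal (vert_lt i).
Arguments vert {k}.

Lemma vert_tooth k (i : 'I_k) : vert i \in tooth i.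
Proof. by rewrite mem_tooth /= modn_small. Qed.

Lemma vert_spine k (i : 'I_k) : vert i \in spine k.
Proof. by rewrite inE /= ltn_ord. Qed.

Lemma tooth_inj k : injective (@tooth k).
Proof.
move=> i j E; have := vert_tooth i; rewrite E mem_tooth /= modn_small //.
by move/eqP/val_inj.
Qed.

Lemma teeth_disj k (i j : 'I_k) : i != j -> [disjoint tooth i & tooth j].
Proof.
move=> ij; rewrite -setI_eq0; apply/eqP/setP => v; rewrite in_setI !mem_tooth in_set0.
apply/negP => /andP [/eqP E1 /eqP E2].
by move: ij; rewrite -(inj_eq val_inj) /= -E1 E2 eqxx.
Qed.

Lemma spine_tooth_ndisj k (i : 'I_k) : ~~ [disjoint spine k & tooth i].
Proof.
by apply/negP => /disjointFr /(_ (vert_spine i)); rewrite vert_tooth.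
Qed.

Lemma spine_notin_Teeth k : (1 < k)%N -> spine k \notin Teeth k.
Proof.
move=> k1; apply/imsetP => [[i _ E]].
have h : (val i + k < k * k)%N.
  rewrite (@leq_trans (k + k)) ?ltn_add2r ?ltn_ord //; nia.
have : Ordinal h \in tooth i by rewrite mem_tooth /= modnDr modn_small.
by rewrite -E inE /= ltnNge leq_addl.
Qed.

Lemma card_Teeth k : #|Teeth k| = k.
Proof. by rewrite card_imset ?card_ord //; apply: tooth_inj. Qed.

Lemma matchingP k (M : {set {set 'I_(k * k)}}) :
  is_matching (comb_edges k) M = (M == [set spine k]) || (M \subset Teeth k).
Proof.
rewrite /is_matching combE; apply/idP/idP.
  case/andP => sub /forallP dis.
  case: (boolP (spine k \in M)) => sM.
    apply/orP; left; apply/eqP/setP => e; rewrite inE; apply/idP/eqP => [eM | ->//].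
    case: (eqVneq e (spine k)) => // ne; exfalso.
    have := subsetP sub e eM; rewrite in_setU in_set1 (negbTE ne) /=.
    case/imsetP => i _ ei.
    have := dis (spine k); rewrite sM /= => /forallP /(_ e); rewrite eM /=.
    by rewrite eq_sym ne ei /= (negbTE (spine_tooth_ndisj i)).
  apply/orP; right; apply/subsetP => e eM.
  have := subsetP sub e eM; rewrite in_setU in_set1; case/orP => // /eqP ee.
  by rewrite -ee eM in sM.
case/orP => [/eqP -> | sub].
  rewrite sub1set in_setU set11 /=; apply/forallP => e1; apply/implyP.
  rewrite in_set1 => /eqP ->; apply/forallP => e2; apply/implyP.
  by rewrite in_set1 => /eqP ->; rewrite eqxx.
rewrite (subset_trans sub (subsetUr _ _)) /=.
apply/forallP => e1; apply/implyP => /(subsetP sub) /imsetP [i _ ->].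
apply/forallP => e2; apply/implyP => /(subsetP sub) /imsetP [j _ ->].
apply/implyP => ne; apply: teeth_disj; apply: contra ne => /eqP -> //.
Qed.

Lemma max_matchingE k : (1 < k)%N -> max_matching (comb_edges k) = k.
Proof.
move=> k1; apply/eqP; rewrite eqn_leq; apply/andP; split.
  apply/bigmax_leqP => M; rewrite matchingP; case/orP => [/eqP -> | sub].
    by rewrite cards1; lia.
  by rewrite (leq_trans (subset_leq_card sub)) // card_Teeth.
rewrite -[X in (X <= _)%N](card_Teeth k) /max_matching.
have := @bigop.bigmax_sup _ (Teeth k) (fun M => is_matching (comb_edges k) M) #|Teeth k| (fun M => #|M|).
rewrite matchingP subxx orbT => /(_ isT (leqnn _)).
exact.
Qed.

Lemma card_matchings k t : (1 < k)%N ->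
  #|matchings (comb_edges k) t| = ((t == 1%N) + 'C(k, t))%N.
Proof.
move=> k1.
set A := [set M : {set {set 'I_(k * k)}} | (M == [set spine k]) && (t == 1%N)].
set B := [set M : {set {set 'I_(k * k)}} | (M \subset Teeth k) & #|M| == t].
have -> : matchings (comb_edges k) t = A :|: B.
  apply/setP => M; rewrite /matchings !inE matchingP.
  case: (boolP (M == [set spine k])) => [/eqP -> | ne] /=; last by rewrite ?andbF.
  rewrite cards1 sub1set (negbTE (spine_notin_Teeth k1)) /= ?orbF.
  by rewrite eq_sym.
rewrite cardsU.
have -> : A :&: B = set0.
  apply/setP => M; rewrite !inE; case: (boolP (M == [set spine k])) => // /eqP ->.
  by rewrite sub1set (negbTE (spine_notin_Teeth k1)) /= andbF.
rewrite cards0 subn0 /B cards_draws card_Teeth.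
congr (_ + _)%N.
rewrite /A; case: (t == 1%N).
  by apply: (@eq_card1 _ [set spine k]) => M; rewrite !inE ?andbT.
by apply: eq_card0 => M; rewrite !inE ?andbF.
Qed.

Unset Implicit Arguments.

Theorem mainTheorem6 (k : nat) (hk : (3 <= k)%N) :
  exists lam : algC,
    root (matching_poly algC k (comb_edges k)) lam /\ lam ^+ k \notin Num.real.
Proof.
have k1 : (1 < k)%N by lia.
have k0 : (0 < k)%N by lia.
have [w [rw nrw]] := @nonreal_root k hk.
have ew : w ^+ k + w - 1 = 0.
  by move: rw; rewrite /root !hornerE => /eqP.
set u := 1 - w.
have u0 : u != 0.
  apply/negP => /eqP u0; have w1 : w = 1 by apply/eqP; rewrite -subr_eq0 -opprB oppr_eq0 -/u u0.
  by move: ew; rewrite w1 expr1n addrK => /eqP; rewrite oner_eq0.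
set y := u^-1.
exists (k.-root y); split; last first.
  rewrite rootCK //; apply: contra nrw => yr.
  have ur : u \is Num.real by rewrite -realV.
  have -> : w = 1 - u by rewrite /u opprB addrC subrK.
  by rewrite rpredB // real1.
rewrite /root /matching_poly max_matchingE //=.
rewrite horner_sum.
have -> : \sum_(i < k.+1)
    (((-1) ^+ i * (#|matchings (comb_edges k) i|)%:R) *: 'X^((k - i) * k)).[k.-root y]
  = \sum_(i < k.+1) ((-1) ^+ i * ('C(k, i))%:R * y ^+ (k - i))
    + \sum_(i < k.+1) ((-1) ^+ i * ((val i == 1%N : nat))%:R * y ^+ (k - i)).
  rewrite -big_split; apply: eq_bigr => i _.
  rewrite hornerZ hornerXn card_matchings // mulnC exprM rootCK //.
  by rewrite natrD /=; ring.
have -> : \sum_(i < k.+1) ((-1) ^+ i * ('C(k, i))%:R * y ^+ (k - i)) = (y - 1) ^+ k.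
  rewrite exprDn; apply: eq_bigr => i _; rewrite mulr_natr; ring.
have i1 : (1 < k.+1)%N by lia.
rewrite (bigD1 (Ordinal i1)) //= big1 => [|i /negbTE]; last first.
  by rewrite -(inj_eq val_inj) /= => ->; rewrite mulr0 mul0r.
rewrite addr0 expr1 mulr1.
have uy : u * y = 1 by rewrite mulfV.
have yw : y - 1 = w * y by rewrite -uy /u; ring.
rewrite yw exprMn.
have wk : w ^+ k = u by rewrite /u; move: ew; rewrite -addrA => /eqP; rewrite addr_eq0 => /eqP ->; rewrite opprB.
rewrite wk.
have -> : y ^+ k = y * y ^+ (k - 1) by rewrite -exprS; congr (_ ^+ _); lia.
by rewrite mulrA uy mul1r mulN1r subrr.
Qed.
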